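(* Let $q\ge2$ and $\mu,R>0$. There is no sequence of $l_i$-shot ID codes for $\Pi^q_{n_i}$, $i=1,2,\dots$, with $n_i\to\infty$, $l_i/n_i\to0$, $M_i\ge 2^{R n_i^{l_i(q-1)}}$ messages, and type-I and type-II error probabilities satisfying $\lambda_{1,i}<n_i^{-l_i\mu}$ and $\lambda_{2,i}<n_i^{-l_i\mu}$ for all $i$.
   Context: Fix an integer $q\ge 2$ and let $\mathcal A_q=\{1,\dots,q\}$. For $n\ge1$ and $\sigma\in S_n$ (the symmetric group on $\{1,\dots,n\}$), $\sigma\mathbf x=(x_{\sigma^{-1}(1)},\dots,x_{\sigma^{-1}(n)})$ for $\mathbf x\in\mathcal A_q^n$. The $n$-block $q$-ary uniform permutation channel $\Pi^q_n$ has input/output alphabet $\mathcal A_q^n$ and $\Pi^q_n(\mathbf y\mid\mathbf x)=\frac1{n!}\sum_{\sigma\in S_n}\mathbf 1\{\mathbf y=\sigma\mathbf x\}$. Using it $l$ times (independently on each block) gives the channel $W^{(l)}$ on $(\mathcal A_q^n)^l$ with $W^{(l)}(\mathbf y^{(1)},\dots,\mathbf y^{(l)}\mid \mathbf x^{(1)},\dots,\mathbf x^{(l)})=\prod_{s=1}^l\Pi^q_n(\mathbf y^{(s)}\mid\mathbf x^{(s)})$. An $l$-shot ID code with $M$ messages for $\Pi^q_n$ (an ''$(n,l,M,\lambda_1,\lambda_2)$ ID code'') is a family $\{(Q_i,\mathcal D_i)\}_{i=1}^M$ with $Q_i$ a probability distribution on $(\mathcal A_q^n)^l$ and $\mathcal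 D_i\subseteq(\mathcal A_q^n)^l$; its error probabilities are $\lambda_{i\to j}=\sum_{\underline{\mathbf x}}Q_i(\underline{\mathbf x})\sum_{\underline{\mathbf y}\in\mathcal D_j}W^{(l)}(\underline{\mathbf y}\mid\underline{\mathbf x})$ ($i\neq j$), $\lambda_{i\not\to i}=\sum_{\underline{\mathbf x}}Q_i(\underline{\mathbf x})\sum_{\underline{\mathbf y}\notin\mathcal D_i}W^{(l)}(\underline{\mathbf y}\mid\underline{\mathbf x})$, type-I error probability $\lambda_1=\max_i\lambda_{i\not\to i}$, type-II error probability $\lambda_2=\max_{i\ne j}\lambda_{i\to j}$. *)

(* Defs.v *)
From HB Require Import structures.
From mathcomp Require Import all_boot all_order all_algebra all_fingroup.
From mathcomp Require Import all_classical all_reals all_analysis.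
Set Implicit Arguments. Unset Strict Implicit. Unset Printing Implicit Defensive.
Import Order.TTheory GRing.Theory Num.Theory.
Local Open Scope ring_scope.

(* Alphabet A_q = {1,..,q} is represented by 'I_q = {0,..,q-1}. *)
Definition word (q n : nat) := {ffun 'I_n -> 'I_q}.

Definition permw (q n : nat) (s : 'S_n) (x : word q n) : word q n :=
  [ffun i => x ((s^-1)%g i)].

Definition PiCh (R : realType) (q n : nat) (y x : word q n) : R :=
  (n`!%:R)^-1 * \sum_(s : 'S_n) (y == permw s x)%:R.

(* inputs/outputs of l uses of the channel *)
Definition block (q n l : nat) := {ffun 'I_l -> word q n}.

Definition Wl (R : realType) (q n l : nat) (ys xs : block q n l) : R :=
  \prod_(s < l) PiCh R (ys s) (xs s).

Record IDcode (R : realType) (q n l M : nat) := {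
  idQ : 'I_M -> {ffun block q n l -> R};
  idD : 'I_M -> {set block q n l};
  idQ_ge0 : forall i x, 0 <= idQ i x;
  idQ_sum1 : forall i, \sum_x idQ i x = 1 }.

Definition lam_to (R : realType) (q n l M : nat) (C : IDcode R q n l M)
    (i j : 'I_M) : R :=
  \sum_(x : block q n l) idQ C i x * \sum_(y in idD C j) Wl R y x.

Definition lam_miss (R : realType) (q n l M : nat) (C : IDcode R q n l M)
    (i : 'I_M) : R :=
  \sum_(x : block q n l) idQ C i x * \sum_(y | y \notin idD C i) Wl R y x.

Definition lambda1 (R : realType) (q n l M : nat) (C : IDcode R q n l M) : R :=
  \big[Num.max/0]_(i < M) lam_miss C i.

Definition lambda2 (R : realType) (q n l M : nat) (C : IDcode R q n l M) : R :=
  \big[Num.max/0]_(i < M) \big[Num.max/0]_(j < M | j != i) lam_to C i j.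

(* Main.v *)
Require Import Defs.
From HB Require Import structures.
From mathcomp Require Import all_boot all_order all_algebra all_fingroup.
From mathcomp Require Import all_classical all_reals all_analysis.
From mathcomp Require Import ring lra zify.
Import Order.TTheory GRing.Theory Num.Theory.
Import numFieldNormedType.Exports.
Set Implicit Arguments. Unset Strict Implicit. Unset Printing Implicit Defensive.
Local Open Scope ring_scope.

Section Aux.
Variable R : realType.

Lemma permwM (q n : nat) (s t : 'S_n) (x : word q n) :
  permw t (permw s x) = permw (s * t)%g x.
Proof. by apply/ffunP => i; rewrite !ffunE invMg permM. Qed.

Lemma PiCh_perm (q n : nat) (s : 'S_n) (y x : word q n) :
  PiCh R y (permw s x) = PiCh R y x.
Proof.
rewrite /PiCh; congr (_ * _).
rewrite [RHS](reindex_inj (mulgI s)) /=.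
by apply: eq_bigr => t _; rewrite permwM.
Qed.

Lemma PiCh_ge0 (q n : nat) (y x : word q n) : 0 <= PiCh R y x.
Proof. by rewrite /PiCh mulr_ge0 // ?invr_ge0 ?ler0n // sumr_ge0 // => s _; rewrite ler0n. Qed.

Lemma PiCh_sum1 (q n : nat) (x : word q n) : \sum_y PiCh R y x = 1.
Proof.
rewrite /PiCh -big_distrr /= exchange_big /=.
have -> : \sum_(s : 'S_n) \sum_(y : word q n) ((y == permw s x)%:R : R) = \sum_(s : 'S_n) 1.
  apply: eq_bigr => s _; rewrite (bigD1 (permw s x)) //= eqxx big1 ?addr0 // => y /negbTE -> //.
rewrite sumr_const card_Sn mulVf // pnatr_eq0 -lt0n; exact: fact_gt0.
Qed.

Lemma Wl_ge0 (q n l : nat) (y x : block q n l) : 0 <= Wl R y x.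
Proof. by apply: prodr_ge0 => s _; exact: PiCh_ge0. Qed.

Lemma Wl_sum1 (q n l : nat) (x : block q n l) : \sum_y Wl R y x = 1.
Proof.
rewrite /Wl.
have := bigA_distr_bigA (fun (s : 'I_l) (w : word q n) => PiCh R w (x s)).
move=> <-; rewrite big1 // => s _; exact: PiCh_sum1.
Qed.

Definition cnt (q n : nat) (w : word q n) (a : 'I_q) : nat :=
  count_mem a (mktuple (fun i => w i)).

Definition wtyp (q n : nat) (w : word q n) : {ffun 'I_q.-1 -> 'I_n.+1} :=
  [ffun a => inord (cnt w (widen_ord (leq_pred q) a))].

Definition btyp (q n l : nat) (x : block q n l) :
  {ffun 'I_l -> {ffun 'I_q.-1 -> 'I_n.+1}} := [ffun s => wtyp (x s)].

Lemma cnt_le (q n : nat) (w : word q n) a : (cnt w a <= n)%N.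
Proof. by rewrite /cnt; apply: leq_trans (count_size _ _) _; rewrite size_tuple. Qed.

Lemma sum_cnt (q n : nat) (w : word q n) : (\sum_(a : 'I_q) cnt w a)%N = n.
Proof.
rewrite /cnt -[RHS](size_tuple (mktuple (fun i => w i))).
elim: (tval _) => [|x s IH]; first by rewrite big1.
rewrite big_split /= IH (bigD1 x) //= eqxx big1 // => a /negbTE.
by rewrite eq_sym => ->.
Qed.

Lemma wtyp_cnt (q n : nat) (w w' : word q n) :
  wtyp w = wtyp w' -> forall a, cnt w a = cnt w' a.
Proof.
case: q w w' => [|q] w w' E a; first by case: a.
have Hw : forall b : 'I_q, cnt w (widen_ord (leqnSn q) b) = cnt w' (widen_ord (leqnSn q) b).
  move=> b; have := congr1 (fun f : {ffun 'I_q -> 'I_n.+1} => val (f b)) E; rewrite !ffunE /= !inordK ?ltnS ?cnt_le //.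
case: (unliftP ord_max a) => [b ->|->].
  have -> : lift ord_max b = widen_ord (leqnSn q) b by apply: val_inj; rewrite /= /bump leqNgt ltn_ord.
  exact: Hw.
have := sum_cnt w; have := sum_cnt w'; rewrite !big_ord_recr /=.
move=> E1 E2; rewrite (eq_bigr _ (fun b _ => Hw b)) in E2.
move: E1 E2; set S := (\sum_(i < q) _)%N; lia.
Qed.

Lemma wtyp_perm (q n : nat) (w w' : word q n) :
  wtyp w = wtyp w' -> exists s : 'S_n, w = permw s w'.
Proof.
move=> /wtyp_cnt E.
have : perm_eq (mktuple (fun i => w i)) (mktuple (fun i => w' i)).
  by apply/allP => a _; rewrite /= -!/(cnt _ _) E.
case/tuple_permP => p Hp.
exists p^-1%g; apply/ffunP => i; rewrite ffunE invgK.
have := congr1 (fun t : n.-tuple _ => tnth t i) (val_inj Hp).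
by rewrite !tnth_mktuple.
Qed.

Lemma Wl_typ (q n l : nat) (x x' : block q n l) (y : block q n l) :
  btyp x = btyp x' -> Wl R y x = Wl R y x'.
Proof.
move=> E; apply: eq_bigr => s _.
have := congr1 (fun f : {ffun 'I_l -> {ffun 'I_q.-1 -> 'I_n.+1}} => f s) E; rewrite !ffunE => /wtyp_perm [p ->].
exact: PiCh_perm.
Qed.

Lemma exists_max (I : finType) (i0 : I) (F : I -> R) : exists j, forall i, F i <= F j.
Proof.
case: (@arg_maxP _ _ I i0 xpredT F erefl) => j _ H; exists j => i; exact: H.
Qed.

Lemma core (T' k m : nat) (P h : 'I_m -> 'I_T'.+1 -> R) (eps : R) :
  (forall i t, 0 <= P i t) -> (forall j t, 0 <= h j t) ->
  (forall i, 1 - eps <= \sum_t P i t * h i t) ->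
  (forall i j, i != j -> \sum_t P i t * h j t <= eps) ->
  0 <= 1 - eps ->
  (m%:R - 1) * eps ^+ k < (1 - eps) ^+ k ->
  (m <= 'C(k + T', k))%N.
Proof.
move=> P0 h0 Hii Hij eps1 Hk.
rewrite -card_sorted_tuples.
set S := [set t : k.-tuple 'I_T'.+1 | sorted leq (map val t)].
rewrite leqNgt; apply/negP => ltSm.
pose U : 'M[R]_(m, #|S|) := \matrix_(i, s) \prod_(x <- (enum_val (s : 'I_#|S|) : k.-tuple 'I_T'.+1)) P i x.
have nfree : ~~ row_free U.
  rewrite /row_free; apply/negP => /eqP Hr.
  by move: (rank_leq_col U); rewrite Hr leqNgt ltSm.
move: nfree; rewrite -kermx_eq0 => /eqP Kn0.
have [r [c0 Hc0]] : exists r c, kermx U r c != 0.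
  case: (pselect (exists r c, kermx U r c != 0)) => [H|Hn]; first exact: H; exfalso.
  apply: Kn0; apply/matrixP => r c; rewrite [X in _ = X]mxE.
  by apply/eqP/negPn/negP => H; apply: Hn; exists r, c.
set cv := fun i : 'I_m => kermx U r i.
have Hs : forall s : 'I_#|S|, \sum_i cv i * U i s = 0.
  move=> s; have := congr1 (fun A => fun_of_matrix A r s) (mulmx_ker U).
  by rewrite !mxE.
have Ht : forall t : k.-tuple 'I_T'.+1, \sum_i cv i * \prod_(x <- t) P i x = 0.
  move=> t.
  pose st := sort_tuple (fun x y : 'I_T'.+1 => (x <= y)%N) t.
  have stS : st \in S.
    rewrite inE sorted_map; apply: sort_sorted => x y; exact: leq_total.
  apply: etrans (Hs (enum_rank_in stS st)).
  apply: eq_bigr => i _; rewrite mxE enum_rankK_in //; congr (_ * _).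
  apply: perm_big; rewrite /st /= perm_sym perm_sort perm_refl //.
have Hf : forall f : {ffun 'I_k -> 'I_T'.+1}, \sum_i cv i * \prod_(s < k) P i (f s) = 0.
  move=> f; rewrite -[RHS](Ht [tuple f s | s < k]); apply: eq_bigr => i _; congr (_ * _).
  by rewrite big_tuple; apply: eq_bigr => s _; rewrite tnth_mktuple.
have Hj : forall j, \sum_i cv i * (\sum_t P i t * h j t) ^+ k = 0.
  move=> j.
  have E : forall i, (\sum_t P i t * h j t) ^+ k =
     \sum_(f : {ffun 'I_k -> 'I_T'.+1}) (\prod_(s < k) P i (f s)) * \prod_(s < k) h j (f s).
    move=> i0; rewrite -[k in LHS]card_ord -prodr_const bigA_distr_bigA.
    by apply: eq_bigr => f _; rewrite -big_split.
  under eq_bigr do rewrite E big_distrr.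
  rewrite exchange_big /= big1 // => f _.
  rewrite -[RHS](mul0r (\prod_(s < k) h j (f s))) -[X in X * _](Hf f) big_distrl /=.
  by apply: eq_bigr => i _; rewrite mulrA.
have a0 : forall i j, 0 <= \sum_t P i t * h j t.
  by move=> i j; apply: sumr_ge0 => t _; rewrite mulr_ge0.
have [j Hmax] := exists_max c0 (fun i => `|cv i|).
have cj0 : 0 < `|cv j| by apply: lt_le_trans (Hmax c0); rewrite normr_gt0.
have := Hj j; rewrite (bigD1 j) //= => /eqP; rewrite addr_eq0 => /eqP Hjj.
have Hle : `|cv j| * (1 - eps) ^+ k <= `|cv j| * ((m.-1)%:R * eps ^+ k).
  apply: le_trans (_ : `|cv j * (\sum_t P j t * h j t) ^+ k| <= _).
    rewrite normrM ler_pM2l // ger0_norm; last exact: exprn_ge0.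
    by apply: lerXn2r; rewrite ?nnegrE.
  rewrite Hjj normrN; apply: le_trans (ler_norm_sum _ _ _) _.
  apply: le_trans (_ : \sum_(i | i != j) `|cv j| * eps ^+ k <= _).
    apply: ler_sum => i ij; rewrite normrM ler_pM ?normr_ge0 //.
    rewrite ger0_norm; last exact: exprn_ge0.
    apply: lerXn2r; rewrite ?nnegrE ?Hij //.
    by apply: le_trans (Hij i j ij).
  by rewrite sumr_const cardC1 card_ord mulr_natl mulrnAr.
rewrite ler_pM2l // in Hle.
have m0 : (0 < m)%N by apply: leq_ltn_trans _ (ltn_ord j).
move: Hk; rewrite -(prednK m0) -addn1 natrD addrK => Hk.
by move: (lt_le_trans Hk Hle); rewrite ltxx.
Qed.

Lemma bern (s : R) (j : nat) : 0 <= s -> (1 + s) ^+ j * (1 - j%:R * s) <= 1.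
Proof.
move=> s0; elim: j => [|j IH]; first by rewrite expr0 mul0r subr0 mul1r.
apply: le_trans IH; rewrite exprSr -mulrA ler_wpM2l ?exprn_ge0 ?addr_ge0 //.
rewrite -addn1 natrD mulrDl mul1r.
have : 0 <= j%:R * s * s + s * s by rewrite addr_ge0 ?mulr_ge0.
nra.
Qed.

Lemma binom_bound (T' k m : nat) : (0 < k)%N -> (8 <= m)%N -> (T'.+1 <= k * m)%N ->
  ('C(k + T', k) < (m ^ 2) ^ k)%N.
Proof.
move=> k0 m8 Tkm.
set n := (k + T')%N.
have m1pos : (0 : R) < (m.+1)%:R by rewrite ltr0n.
set t : R := (2 * (m.+1)%:R)^-1.
have t0 : 0 < t by rewrite invr_gt0 mulr_gt0.
have H1 : 'C(n, k)%:R * t ^+ k <= (1 + t) ^+ n.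
  rewrite exprDn.
  have kn : (k < n.+1)%N by rewrite ltnS leq_addr.
  rewrite (bigD1 (Ordinal kn)) //= expr1n mul1r mulr_natl.
  by rewrite lerDl; apply: sumr_ge0 => i _; rewrite mulrn_wge0 // mulr_ge0 ?exprn_ge0 // ltW.
have H2 : (1 + t) ^+ n <= (1 + t) ^+ (m.+1 * k).
  apply: ler_weXn2l; first by rewrite lerDl ltW.
  rewrite /n; move: Tkm; clear; nia.
have H3 : (1 + t) ^+ m.+1 <= 2.
  have := @bern t m.+1 (ltW t0).
  have -> : 1 - (m.+1)%:R * t = 2^-1.
    rewrite /t invfM mulrCA mulfV ?gt_eqF // mulr1; lra.
  move=> Hb; rewrite -(ler_pM2r (_ : (0:R) < 2^-1)) ?divff //; lra.
have H4 : 'C(n, k)%:R * t ^+ k <= 2 ^+ k.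
  apply: le_trans H1 (le_trans H2 _); rewrite exprM.
  by apply: lerXn2r; rewrite ?nnegrE // exprn_ge0 // addr_ge0 // ltW.
have H5 : ('C(n, k)%:R : R) <= (4 * (m.+1)%:R) ^+ k.
  have tk0 : 0 < t ^+ k by rewrite exprn_gt0.
  rewrite -(ler_pM2r tk0); apply: le_trans H4 _.
  rewrite -exprMn.
  have -> : 4 * (m.+1)%:R * t = 2.
    rewrite /t; field; rewrite gt_eqF //; have := ler0n R m; lra.
  by [].
rewrite -(ltr_nat R); apply: le_lt_trans H5 _.
have Hx : (4 * (m.+1)%:R : R) < (m^2)%:R.
  by rewrite -natrM ltr_nat; move: m8; clear; nia.
by rewrite natrX ltrXn2r ?ler0n ?mulr_ge0 // -lt0n.
Qed.

Lemma core' (T k m : nat) (P h : 'I_m -> 'I_T -> R) (eps : R) : (0 < T)%N ->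
  (forall i t, 0 <= P i t) -> (forall j t, 0 <= h j t) ->
  (forall i, 1 - eps <= \sum_t P i t * h i t) ->
  (forall i j, i != j -> \sum_t P i t * h j t <= eps) ->
  0 <= 1 - eps ->
  (m%:R - 1) * eps ^+ k < (1 - eps) ^+ k ->
  (m <= 'C(k + T.-1, k))%N.
Proof. by case: T P h => // T' P h _; apply: core. Qed.

Definition gD (q n l M : nat) (C : IDcode R q n l M) (j : 'I_M) (x : block q n l) : R :=
  \sum_(y in idD C j) Wl R y x.

Lemma gD_ge0 q n l M (C : IDcode R q n l M) j x : 0 <= gD C j x.
Proof. by apply: sumr_ge0 => y _; exact: Wl_ge0. Qed.

Lemma lam_miss_eq q n l M (C : IDcode R q n l M) i :
  lam_miss C i = 1 - lam_to C i i.
Proof.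
rewrite /lam_miss /lam_to -(idQ_sum1 C i) -sumrB; apply: eq_bigr => x _.
rewrite -[X in X - _]mulr1 -mulrBr; congr (_ * _).
by rewrite -(Wl_sum1 x) [in RHS](bigID (fun y => y \in idD C i)) /= addrC addrK.
Qed.

Lemma reduce (q n l M M' k : nat) (C : IDcode R q n l M) (eps : R) :
  (M' <= M)%N -> lambda1 C < eps -> lambda2 C < eps -> 0 <= 1 - eps ->
  (M'%:R - 1) * eps ^+ k < (1 - eps) ^+ k ->
  (M' <= 'C(k + ((n.+1 ^ q.-1) ^ l).-1, k))%N.
Proof.
move=> MM L1 L2 e1 Hk.
pose Th := {ffun 'I_l -> {ffun 'I_q.-1 -> 'I_n.+1}}.
have cT : #|Th| = ((n.+1 ^ q.-1) ^ l)%N by rewrite card_ffun card_ffun !card_ord.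
rewrite -cT.
pose wi (i : 'I_M') : 'I_M := widen_ord MM i.
pose P (i : 'I_M') (t : 'I_#|Th|) : R := \sum_(x | btyp x == enum_val t) idQ C (wi i) x.
pose h (j : 'I_M') (t : 'I_#|Th|) : R :=
  if [pick x | btyp x == enum_val t] is Some x then gD C (wi j) x else 0.
have key : forall i j, lam_to C (wi i) (wi j) = \sum_t P i t * h j t.
  move=> i j; rewrite /lam_to.
  rewrite (partition_big (fun x => enum_rank (btyp x)) xpredT) //=.
  apply: eq_bigr => t _; rewrite /P big_distrl /=.
  apply: eq_big => x; first by apply/eqP/eqP => [<-|->]; rewrite ?enum_rankK ?enum_valK.
  move=> /eqP Hx; congr (_ * _); rewrite /h.
  case: pickP => [x' /eqP Hx'|]; last by move/(_ x); rewrite -Hx enum_rankK eqxx.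
  apply: eq_bigr => y _; apply: Wl_typ; by rewrite Hx' -Hx enum_rankK.
apply: (@core' _ _ _ P h eps).
- by rewrite cT expn_gt0 expn_gt0.
- by move=> i t; apply: sumr_ge0 => x _; exact: idQ_ge0.
- by move=> j t; rewrite /h; case: pickP => // x _; exact: gD_ge0.
- move=> i; rewrite -key.
  have : lam_miss C (wi i) <= lambda1 C by exact: le_bigmax.
  rewrite lam_miss_eq => H; apply/ltW; rewrite -subr_gt0; move: (le_lt_trans H L1); lra.
- move=> i j ij; rewrite -key; apply/ltW; apply: le_lt_trans L2.
  apply: le_trans (le_bigmax _ _ (wi i)).
  apply: le_bigmax_cond.
  by apply: contra ij => /eqP/(congr1 val) H; apply/eqP/val_inj; exact: esym H.
- exact: e1.
- exact: Hk.
Qed.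

Lemma pow2_ge_sq (b : nat) : (4 <= b)%N -> (b ^ 2 <= 2 ^ b)%N.
Proof.
move=> /subnK <-; elim: (b - 4)%N => // d IH.
rewrite addSn; apply: leq_trans (_ : 2 * (d + 4) ^ 2 <= _)%N.
  by rewrite !expnS expn0; nia.
by rewrite [X in (_ <= X)%N]expnS leq_pmul2l.
Qed.

Lemma pow_np1 (n l : nat) : (0 < n)%N -> (2 * l <= n)%N -> (n.+1 ^ l <= 2 * n ^ l)%N.
Proof.
move=> n0 ln.
rewrite -(ler_nat R) natrM !natrX.
set s : R := (n%:R)^-1.
have np : (0 : R) < n%:R by rewrite ltr0n.
have -> : (n.+1)%:R = n%:R * (1 + s) by rewrite mulrDr mulr1 mulfV ?gt_eqF // -natr1 addrC.
rewrite exprMn [X in _ <= X]mulrC ler_pM2l ?exprn_gt0 //.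
have s0 : 0 <= s by rewrite invr_ge0 ltW.
have Hb := bern l s0.
have hl : l%:R * s <= 2^-1.
  have sn : s * n%:R = 1 by rewrite /s mulVf ?gt_eqF.
  have : 2 * l%:R <= (n%:R : R) by rewrite -natrM ler_nat.
  nra.
have e0 : 0 <= (1 + s) ^+ l by rewrite exprn_ge0 // addr_ge0.
nra.
Qed.

Lemma l0_case q n l M (C : IDcode R q n l M) : l = 0%N -> (2 <= M)%N ->
  lambda1 C < 1 -> lambda2 C < 1 -> False.
Proof.
move=> l0; subst l => M2 L1 L2.
have Wl1 : forall y x : block q n 0, Wl R y x = 1 by move=> y x; rewrite /Wl big_ord0.
have lamE : forall i j, lam_to C i j = #|idD C j|%:R.
  move=> i j; rewrite /lam_to (eq_bigr (fun x => idQ C i x * #|idD C j|%:R)).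
    by rewrite -big_distrl /= idQ_sum1 mul1r.
  by move=> x _; congr (_ * _); rewrite (eq_bigr (fun _ => 1)) ?sumr_const // => y _; exact: Wl1.
have card1 : forall j, (#|idD C j| <= 1)%N.
  move=> j; apply: leq_trans (max_card _) _; rewrite card_ffun card_ord expn0 //.
pose i0 : 'I_M := Ordinal (ltn_trans (ltnSn 0) M2).
pose i1 : 'I_M := Ordinal M2.
have : lam_miss C i0 < 1 by apply: le_lt_trans L1; exact: le_bigmax.
rewrite lam_miss_eq lamE => H.
have c1 : #|idD C i0| = 1%N.
  move: H (card1 i0); case: #|idD C i0| => [|[|c]] //=; first by rewrite subr0 ltxx.
have : lam_to C i1 i0 < 1.
  apply: le_lt_trans L2; apply: le_trans (le_bigmax _ _ i1).
  by apply: le_bigmax_cond.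
by rewrite lamE c1 ltxx.
Qed.

End Aux.
Local Open Scope classical_set_scope.
Lemma ev_half (R : realType) (l n : nat -> nat) :
  (fun i => (l i)%:R / (n i)%:R : R) @ \oo --> (0 : R) ->
  exists N, forall i, (N <= i)%N -> (l i)%:R / (n i)%:R < (2^-1 : R).
Proof.
move=> /cvgrPdist_lt /(_ (2^-1) _) [|N _ HN]; first by rewrite invr_gt0 ltr0n.
exists N => i /HN; rewrite sub0r normrN; apply: le_lt_trans; exact: ler_norm.
Qed.
Local Open Scope ring_scope.

Unset Implicit Arguments.

Theorem theorem2 (R : realType) (q : nat) (mu rate : R) :
  (2 <= q)%N -> 0 < mu -> 0 < rate ->
  forall (n l M : nat -> nat) (C : forall i, IDcode R q (n i) (l i) (M i)),
  ~ [/\ (forall B : nat, exists N : nat, forall i, (N <= i)%N -> (B <= n i)%N),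
        (fun i => (l i)%:R / (n i)%:R : R) @ \oo --> (0 : R),
        (forall i, powR 2 (rate * ((n i) ^ (l i * (q - 1)))%:R) <= (M i)%:R),
        (forall i, lambda1 (C i) < powR (n i)%:R (- ((l i)%:R * mu)))
      & (forall i, lambda2 (C i) < powR (n i)%:R (- ((l i)%:R * mu)))].
Proof.
move=> q2 mu0 r0 n l M C [Hn Hl HM H1 H2].
pose K := (2 ^ q.-1)%N.
pose b := maxn 4 (Num.truncn (4 * K%:R / rate)).+1.
have b4 : (4 <= b)%N by rewrite leq_maxl.
have bK : 4 * K%:R <= rate * b%:R.
  have h : 4 * K%:R / rate < b%:R.
    by apply: lt_le_trans (truncnS_gt _) _; rewrite ler_nat leq_maxr.
  have e : 4 * K%:R = (4 * K%:R / rate) * rate by rewrite divfK ?gt_eqF.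
  by rewrite e [X in _ <= X]mulrC; apply/ltW; rewrite ltr_pM2r.
pose m := (2 ^ b)%N.
have m8 : (8 <= m)%N by rewrite /m (leq_trans _ (leq_pexp2l _ b4)).
have Hbm : 4 * b%:R * K%:R <= rate * m%:R.
  have : (b ^ 2 <= m)%N by exact: pow2_ge_sq.
  rewrite -(ler_nat R) natrX => Hb2.
  have b0 : (0 : R) <= b%:R by [].
  apply: le_trans (_ : rate * b%:R ^+ 2 <= _); last by rewrite ler_pM2l.
  rewrite expr2; nra.
pose X : R := (m ^ 2).+1%:R.
pose B1 := (Num.truncn (powR X mu^-1)).+1.
pose B2 := (Num.truncn (4 * b%:R / rate)).+1.
have [N1 HN1] := Hn (maxn 1 (maxn B1 B2)).
have [N2 HN2] := ev_half Hl.
pose i := maxn N1 N2.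
have ni := HN1 i (leq_maxl _ _).
have li := HN2 i (leq_maxr _ _).
move: (M i) (HM i) (C i) (H1 i) (H2 i) ni li.
move: (n i) (l i) => nn ll Mi HMi Ci H1i H2i ni li {HM H1 H2 C Hn Hl HN1 HN2 i}.
have n1 : (1 <= nn)%N by apply: leq_trans ni; rewrite leq_maxl.
have nB1 : (B1 <= nn)%N by apply: leq_trans ni; rewrite leq_max leq_maxl orbT.
have nB2 : (B2 <= nn)%N by apply: leq_trans ni; rewrite leq_max leq_maxr orbT.
have np : (0 : R) < nn%:R by rewrite ltr0n.
have l2n : (2 * ll <= nn)%N.
  rewrite -(ler_nat R) natrM; move: li; rewrite ltr_pdivrMr // => H; apply/ltW.
  have : (0:R) < 2 by []. nra.
case: (posnP ll) => [l0|lpos].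
  apply: (l0_case l0 (C := Ci)).
  - rewrite -(ltr_nat R); apply: lt_le_trans HMi.
    rewrite l0 mul0n expn0 mulr1 /powR (negbTE (_ : (2:R) != 0)) //.
    by rewrite expR_gt1 mulr_gt0 // ln_gt0 // ltr1n.
  - by move: H1i; rewrite [in ll%:R]l0 mul0r oppr0 powRr0.
  - by move: H2i; rewrite [in ll%:R]l0 mul0r oppr0 powRr0.
pose T := ((nn.+1 ^ q.-1) ^ ll)%N.
have T0 : (0 < T)%N by rewrite expn_gt0 expn_gt0.
pose k := (T %/ m).+1.
have k0 : (0 < k)%N by [].
have m0 : (0 < m)%N by rewrite expn_gt0.
have Tkm : (T <= k * m)%N by apply: ltnW; exact: ltn_ceil.
have kmT : (k * m <= T + m)%N by rewrite /k mulSn addnC leq_add2r leq_trunc_div.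
pose N := (nn ^ (ll * (q - 1)))%N.
have q1 : (0 < q.-1)%N by rewrite -subn1 subn_gt0.
have TKN : (T <= K * N)%N.
  rewrite /T -expnAC; apply: leq_trans (_ : (2 * nn ^ ll) ^ q.-1 <= _)%N.
    by rewrite leq_exp2r // pow_np1.
  by rewrite expnMn -expnM /N subn1.
have NN : (nn <= N)%N.
  rewrite -{1}(expn1 nn) leq_pexp2l // subn1 muln_gt0 lpos //.
pose M' := ((m ^ 2) ^ k)%N.
pose eps := powR nn%:R (- (ll%:R * mu)).
have Pge : X <= powR nn%:R (ll%:R * mu).
  have h1 : powR nn%:R mu <= powR nn%:R (ll%:R * mu).
    apply: ler_powR; first by rewrite ler1n.
    by rewrite ler_peMl ?ler1n // ltW.
  apply: le_trans h1.
  have h2 : powR X mu^-1 <= nn%:R.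
    apply/ltW; apply: lt_le_trans (truncnS_gt _) _; by rewrite ler_nat.
  have := ge0_ler_powR (ltW mu0) _ _ h2; rewrite !nnegrE powR_ge0 ler0n => /(_ isT isT).
  by rewrite -powRrM mulVf ?gt_eqF // powRr1 // ler0n.
have eps0 : 0 < eps by rewrite powR_gt0.
have X1 : 1 <= X by rewrite ler1n.
have epsX : eps * X <= 1.
  have Pp : 0 < powR nn%:R (ll%:R * mu) by rewrite powR_gt0.
  rewrite /eps powRN -ler_pdivlMl ?invr_gt0 // invrK mulr1 //.
have e1 : 0 <= 1 - eps by nra.
have Hk : (M'%:R - 1) * eps ^+ k < (1 - eps) ^+ k.
  have z0 : (0 : R) <= (m ^ 2)%:R by [].
  have ze : (m ^ 2)%:R * eps <= 1 - eps.
    move: epsX; rewrite /X -natr1; nra.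
  apply: lt_le_trans (_ : M'%:R * eps ^+ k <= _).
    by rewrite ltr_pM2r ?exprn_gt0 // ltrBlDr ltrDl.
  rewrite /M' natrX -exprMn; apply: lerXn2r => //; rewrite nnegrE.
    by rewrite mulr_ge0 // ltW.
have MM : (M' <= Mi)%N.
  rewrite -(ler_nat R); apply: le_trans HMi.
  have eM : M' = (2 ^ (b * 2 * k))%N by rewrite /M' /m -expnM -expnM mulnA.
  rewrite eM.
  rewrite natrX -powR_mulrn //; apply: ler_powR; first by rewrite ler1n.
  have km : k%:R * m%:R <= T%:R + (m%:R : R) by rewrite -natrM -natrD ler_nat.
  have TK : T%:R <= K%:R * (N%:R : R) by rewrite -natrM ler_nat.
  have HB2 : 4 * b%:R <= rate * N%:R.
    have h : 4 * b%:R / rate < N%:R.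
      apply: lt_le_trans (truncnS_gt _) _; rewrite ler_nat; exact: leq_trans nB2 NN.
    have e : 4 * b%:R = (4 * b%:R / rate) * rate by rewrite divfK ?gt_eqF.
    by rewrite e [X in _ <= X]mulrC; apply/ltW; rewrite ltr_pM2r.
  have mp : (0 : R) < m%:R by rewrite ltr0n.
  have Np : (0 : R) <= N%:R by [].
  have kp : (0 : R) <= k%:R by [].
  have bp : (0 : R) <= b%:R by [].
  have Kp : (0 : R) <= K%:R by [].
  rewrite -(ler_pM2r mp) natrM natrM.
  nra.
have red := reduce MM H1i H2i e1 Hk.
have bb := @binom_bound R T.-1 k m k0 m8 (ltac:(by rewrite prednK)).
by move: (leq_ltn_trans red bb); rewrite ltnn.
Qed.
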